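(* Every absolutely flat (von Neumann regular) commutative ring $S$ has strong avoidance.
   Context: All rings are commutative with $1\neq 0$. A ring map $\phi:R\to S$ has avoidance if whenever $I,I_1,\ldots,I_n$ are ideals of $R$ with $I\subseteq\bigcup_{k=1}^n I_k$, then $IS\subseteq I_kS$ for some $k$ (where $IS$ denotes the extension of $I$ to $S$). A ring $S$ has strong avoidance if every ring map $R\to S$ has avoidance. *)

(* Defs.v *)
From HB Require Import structures.
From mathcomp Require Import all_boot all_order all_algebra.
Set Implicit Arguments. Unset Strict Implicit. Unset Printing Implicit Defensive.
Import GRing.Theory.
Local Open Scope ring_scope.

(* Commutative rings with 1 <> 0 are MathComp's [comNzRingType]. *)

Definition is_ideal (R : comNzRingType) (I : R -> Prop) : Prop :=
  [/\ I 0, (forall a b, I a -> I b -> I (a + b)) & (forall r a, I a -> I (r * a))].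

(* The extension IS of an ideal I of R along phi : R -> S: the ideal of S
   generated by phi(I), i.e. all finite S-linear combinations of images. *)
Definition ext_ideal (R S : comNzRingType) (phi : {rmorphism R -> S})
  (I : R -> Prop) : S -> Prop :=
  fun s => exists (n : nat) (a : 'I_n -> R) (c : 'I_n -> S),
    (forall i, I (a i)) /\ s = \sum_(i < n) c i * phi (a i).

Definition has_avoidance (R S : comNzRingType) (phi : {rmorphism R -> S}) : Prop :=
  forall (I : R -> Prop) (n : nat) (Is : 'I_n -> R -> Prop),
    is_ideal I -> (forall k, is_ideal (Is k)) ->
    (forall x, I x -> exists k, Is k x) ->
    exists k : 'I_n, forall s, ext_ideal phi I s -> ext_ideal phi (Is k) s.

Definition strong_avoidance (S : comNzRingType) : Prop :=
  forall (R : comNzRingType) (phi : {rmorphism R -> S}), has_avoidance phi.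

Definition von_neumann_regular (S : comNzRingType) : Prop :=
  forall a : S, exists x : S, a = a * a * x.

(* Main.v *)
Require Import Defs.
From mathcomp Require Import all_boot all_order all_algebra.
From mathcomp Require Import ring.
From mathcomp Require classical_sets boolp.
From Stdlib Require Import Classical.
Set Implicit Arguments. Unset Strict Implicit. Unset Printing Implicit Defensive.
Import GRing.Theory.
Local Open Scope ring_scope.

Definition prime_id (R : comNzRingType) (q : R -> Prop) : Prop :=
  [/\ is_ideal q, ~ q 1 & forall a b, q (a * b) -> q a \/ q b].

Lemma ideal0 (R : comNzRingType) (I : R -> Prop) : is_ideal I -> I 0.
Proof. by case. Qed.
Lemma idealD (R : comNzRingType) (I : R -> Prop) a b : is_ideal I -> I a -> I b -> I (a + b).
Proof. by case=> _ H _; apply: H. Qed.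
Lemma idealM (R : comNzRingType) (I : R -> Prop) r a : is_ideal I -> I a -> I (r * a).
Proof. by case=> _ _ H; apply: H. Qed.
Lemma idealMr (R : comNzRingType) (I : R -> Prop) r a : is_ideal I -> I a -> I (a * r).
Proof. by move=> HI Ha; rewrite mulrC; apply: idealM. Qed.
Lemma idealN (R : comNzRingType) (I : R -> Prop) a : is_ideal I -> I a -> I (- a).
Proof. by move=> HI Ha; rewrite -mulN1r; apply: idealM. Qed.
Lemma idealB (R : comNzRingType) (I : R -> Prop) a b : is_ideal I -> I a -> I b -> I (a - b).
Proof. by move=> HI Ha Hb; apply: idealD => //; apply: idealN. Qed.

Lemma prime_prod (R : comNzRingType) (q : R -> Prop) n (f : 'I_n -> R) :
  prime_id q -> q (\prod_(i < n) f i) -> exists i, q (f i).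
Proof.
move=> [Hq Hq1 Hqp]; elim: n f => [|n IH] f.
  by rewrite big_ord0.
rewrite big_ord_recl => /Hqp [H|H]; first by exists ord0.
by have [i Hi] := IH _ H; exists (lift ord0 i).
Qed.

Lemma ideal_prod (R : comNzRingType) (q : R -> Prop) n (f : 'I_n -> R) j :
  is_ideal q -> q (f j) -> q (\prod_(i < n) f i).
Proof.
by move=> Hq Hj; rewrite (bigD1 j) //=; apply: idealMr.
Qed.

Lemma avoid (R : comNzRingType) n : forall (I : R -> Prop) (q : 'I_n -> R -> Prop),
  is_ideal I -> (forall k, prime_id (q k)) -> (forall k, exists x, I x /\ ~ q k x) ->
  exists x, I x /\ forall k, ~ q k x.
Proof.
elim: n => [|n IH] I q HI Hq Hex.
  by exists 0; split; [exact: ideal0 | case].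
destruct n as [|m].
  have [x [Ix Hx]] := Hex ord0; exists x; split => // k.
  by rewrite (ord1 k).
have Hy : forall k : 'I_m.+2, exists y, I y /\ forall j, ~ q (lift k j) y.
  move=> k; apply: (IH I (fun j => q (lift k j))) => // j.
have [y Hy'] := boolp.choice Hy.
have Hne : forall i k, i != k -> ~ q k (y i).
  move=> i k /unlift_some [j -> _]; exact: (Hy' i).2.
case: (classic (exists k, ~ q k (y k))) => [[k Hk]|Hall].
  exists (y k); split; first exact: (Hy' k).1.
  move=> k'; case: (eqVneq k k') => [<- //|]; exact: Hne.
have Hin : forall k, q k (y k).
  by move=> k; apply: NNPP => H; apply: Hall; exists k.
exists (y ord0 + \prod_(j < m.+1) y (lift ord0 j)); split.
  apply: idealD => //; first exact: (Hy' _).1.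
  by apply: (@ideal_prod _ _ _ _ ord0) => //; exact: (Hy' _).1.
move=> k Hz.
have [Hk1 _ _] := Hq k.
case: (eqVneq k ord0) => [Ek|Nk].
  subst k.
  have Hp : q ord0 (\prod_(j < m.+1) y (lift ord0 j)).
    have -> : \prod_(j < m.+1) y (lift ord0 j) =
      (y ord0 + \prod_(j < m.+1) y (lift ord0 j)) - y ord0 by ring.
    by apply: idealB.
  have [j Hj] := prime_prod (Hq ord0) Hp.
  by apply: (Hne (lift ord0 j) ord0) => //; rewrite eq_sym neq_lift.
have Hp : q k (\prod_(j < m.+1) y (lift ord0 j)).
  have [j Ej _] := unlift_some (ltac:(by rewrite eq_sym) : ord0 != k).
  by apply: (@ideal_prod _ _ _ _ j) => //; rewrite -Ej.
apply: (Hne ord0 k); first by rewrite eq_sym.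
have -> : y ord0 = (y ord0 + \prod_(j < m.+1) y (lift ord0 j)) - \prod_(j < m.+1) y (lift ord0 j) by ring.
by apply: idealB.
Qed.

Definition addline (R : comNzRingType) (A : R -> Prop) (a : R) : R -> Prop :=
  fun r => exists u c, A u /\ r = u + c * a.

Lemma addline_ideal (R : comNzRingType) (A : R -> Prop) a :
  is_ideal A -> is_ideal (addline A a).
Proof.
move=> HA; split.
- by exists 0, 0; split; [exact: ideal0 | rewrite mul0r addr0].
- move=> r s [u [c [Hu ->]]] [v [d [Hv ->]]].
  exists (u + v), (c + d); split; first exact: idealD.
  ring.
- move=> r s [u [c [Hu ->]]]; exists (r * u), (r * c); split; first exact: idealM.
  ring.
Qed.

Lemma krull (R : comNzRingType) (K : R -> Prop) (x : R) :
  is_ideal K -> (forall m, ~ K (x ^+ m)) ->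
  exists q, prime_id q /\ (forall a, K a -> q a) /\ ~ q x.
Proof.
move=> HK Hpow.
pose P := fun A : R -> Prop => (forall a, ~ A a) \/
  (is_ideal A /\ (forall a, K a -> A a) /\ forall m, ~ A (x ^+ m)).
have HP : forall X : R -> Prop, P X -> forall a, X a ->
   (is_ideal X /\ (forall a, K a -> X a) /\ forall m, ~ X (x ^+ m)).
  by move=> X [H|H] a Xa //; case: (H a).
have [A [PA Amax]] : exists A : R -> Prop, P A /\
    (forall B, classical_sets.proper A B -> ~ P B).
  apply: classical_sets.Zorn_bigcup => F FP Ftot.
  case: (classic (exists a, classical_sets.bigcup F id a))
    => [[a [X FX Xa]]|Hn]; last first.
    by left => a Ha; apply: Hn; exists a.
  have [HX [KX _]] := HP X (FP X FX) a Xa.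
  right; split; last split.
  - split.
    + by exists X => //; exact: ideal0.
    + move=> r s [X1 F1 X1r] [X2 F2 X2s].
      case: (Ftot X1 X2 F1 F2) => [S12|S21].
      * exists X2 => //; have [H2 _] := HP X2 (FP X2 F2) s X2s.
        by apply: idealD => //; apply: S12.
      * exists X1 => //; have [H1 _] := HP X1 (FP X1 F1) r X1r.
        by apply: idealD => //; apply: S21.
    + move=> r s [X1 F1 X1s]; exists X1 => //.
      have [H1 _] := HP X1 (FP X1 F1) s X1s; exact: idealM.
  - by move=> b Kb; exists X => //; apply: KX.
  - move=> m [X1 F1 X1m]; have [_ [_ H]] := HP X1 (FP X1 F1) _ X1m.
    exact: (H m).
have PK : P K by right; split => //.
case: PA => [Aempty|[HA [KA Apow]]].
  have Hpr : classical_sets.proper A K.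
    split; first by move=> a Aa; case: (Aempty a).
    by move=> H; apply: (Aempty 0); apply: H; exact: ideal0.
  by case: (Amax K Hpr PK).
have notP : forall a, ~ A a -> exists m, addline A a (x ^+ m).
  move=> a Na; apply: NNPP => Hn.
  have Hpr : classical_sets.proper A (addline A a).
    split.
      by move=> r Ar; exists r, 0; rewrite mul0r addr0.
    by move=> H; apply: Na; apply: H; exists 0, 1; rewrite add0r mul1r; split => //; exact: ideal0.
  apply: (Amax _ Hpr); right; split; first exact: addline_ideal.
  split.
    by move=> r Kr; exists r, 0; rewrite mul0r addr0; split => //; apply: KA.
  by move=> m Hm; apply: Hn; exists m.
exists A; split; last split => //.
- split => //.
  + by move=> H; apply: (Apow 0%N); rewrite expr0.
  + move=> a b Hab; apply: NNPP => Hn.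
    have Na : ~ A a by move=> H; apply: Hn; left.
    have Nb : ~ A b by move=> H; apply: Hn; right.
    have [m [u [c [Hu Em]]]] := notP a Na.
    have [l [v [d [Hv El]]]] := notP b Nb.
    apply: (Apow (m + l)%N); rewrite exprD Em El.
    have -> : (u + c * a) * (v + d * b) = u * (v + d * b) + v * (c * a) + (c * d) * (a * b) by ring.
    apply: idealD => //; [apply: idealD => //|]; [apply: idealMr|apply: idealMr|apply: idealM] => //.
- by move=> H; apply: (Apow 1%N); rewrite expr1.
Qed.

Section Ext.
End Ext.

Lemma ext0 (R S : comNzRingType) (phi : {rmorphism R -> S}) (I : R -> Prop) :
  ext_ideal phi I 0.
Proof. by exists 0%N, (fun _ => 0), (fun _ => 0); split => [[]//|]; rewrite big_ord0. Qed.

Lemma extD (R S : comNzRingType) (phi : {rmorphism R -> S}) (I : R -> Prop) s t :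
  ext_ideal phi I s -> ext_ideal phi I t -> ext_ideal phi I (s + t).
Proof.
move=> [n1 [a1 [c1 [H1 ->]]]] [n2 [a2 [c2 [H2 ->]]]].
exists (n1 + n2)%N,
  (fun i => match split i with inl i => a1 i | inr j => a2 j end),
  (fun i => match split i with inl i => c1 i | inr j => c2 j end).
split.
  by move=> i; case: (split i).
rewrite big_split_ord /=.
have El : forall i, split (lshift n2 i) = inl i := fun i => unsplitK (inl _ i).
have Er : forall i, split (rshift n1 i) = inr i := fun i => unsplitK (inr _ i).
congr (_ + _); apply: eq_bigr => i _; by rewrite ?El ?Er.
Qed.

Lemma extM (R S : comNzRingType) (phi : {rmorphism R -> S}) (I : R -> Prop) r s :
  ext_ideal phi I s -> ext_ideal phi I (r * s).
Proof.
move=> [n [a [c [H ->]]]]; exists n, a, (fun i => r * c i); split => //.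
by rewrite mulr_sumr; apply: eq_bigr => i _; rewrite mulrA.
Qed.

Lemma extG (R S : comNzRingType) (phi : {rmorphism R -> S}) (I : R -> Prop) a :
  I a -> ext_ideal phi I (phi a).
Proof.
move=> Ia; exists 1%N, (fun _ => a), (fun _ => 1); split => //.
by rewrite big_ord1 mul1r.
Qed.

Lemma ext_is_ideal (R S : comNzRingType) (phi : {rmorphism R -> S}) (I : R -> Prop) :
  is_ideal (ext_ideal phi I).
Proof. split; [exact: ext0 | exact: extD | exact: extM]. Qed.

Lemma vnr_rad (S : comNzRingType) (J : S -> Prop) s m :
  von_neumann_regular S -> is_ideal J -> J (s ^+ m) -> J s.
Proof.
move=> vnr HJ; have [y Hy] := vnr s.
have key : forall k, s = s ^+ k.+1 * y ^+ k.
  elim=> [|k IH]; first by rewrite expr1 expr0 mulr1.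
  have -> : s ^+ k.+2 * y ^+ k.+1 = (s ^+ k.+1 * y ^+ k) * (s * y) by rewrite !exprS; ring.
  by rewrite -IH mulrA -Hy.
case: m => [|k] H.
  by rewrite -(mulr1 s); apply: idealM; rewrite expr0 in H.
by rewrite (key k); apply: idealMr.
Qed.

Theorem proposition4p3 (S : comNzRingType) :
  von_neumann_regular S -> strong_avoidance S.
Proof.
move=> vnr R phi I n Is HI HIs Hcov.
apply: NNPP => Hnot.
have H1 : forall k, exists x, I x /\ ~ ext_ideal phi (Is k) (phi x).
  move=> k; apply: NNPP => Hk; apply: Hnot; exists k.
  move=> s [m [a [c [Ha ->]]]].
  apply: (big_ind (fun t => ext_ideal phi (Is k) t)).
  - exact: ext0.
  - by move=> ? ?; apply: extD.
  - move=> i _; apply: extM; apply: NNPP => Hi; apply: Hk; exists (a i); split => //.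
have H2 : forall k, exists q, prime_id q /\ (forall a, Is k a -> q a) /\
     exists x, I x /\ ~ q x.
  move=> k; have [x [Ix Nx]] := H1 k.
  have HK : is_ideal (fun r => ext_ideal phi (Is k) (phi r)).
    split.
    - by rewrite rmorph0; exact: ext0.
    - by move=> a b Ha Hb; rewrite rmorphD; apply: extD.
    - by move=> r a Ha; rewrite rmorphM; apply: extM.
  have Hp : forall m, ~ ext_ideal phi (Is k) (phi (x ^+ m)).
    move=> m Hm; apply: Nx; apply: (vnr_rad (m := m) vnr (ext_is_ideal phi (Is k))).
    by rewrite -rmorphXn.
  have [q [Pq [Kq Nq]]] := krull HK Hp.
  exists q; split => //; split; last by exists x.
  by move=> a Ha; apply: Kq; apply: extG.
have [q Hq] := boolp.choice H2.
have [x [Ix Hx]] := avoid HI (fun k => (Hq k).1)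
  (fun k => let: conj _ (conj _ e) := Hq k in e).
have [k Hk] := Hcov x Ix.
by apply: (Hx k); apply: (Hq k).2.1.
Qed.
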